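(* Let $n,N\ge 1$ and $\varepsilon\ge 0$ be integers with $\varepsilon/n\le 1/2$ and $N<2^{n(1-h(\varepsilon/n))-1}$. Suppose the $N$ enrolled templates are distinct (drawn uniformly without replacement from $\mathbb{Z}_2^n$), so that the success probability of a single uniformly random guess is $$p=1-\prod_{\ell=0}^{N-1}\left(1-\frac{2^n}{2^n-\ell}V_\varepsilon\right),$$ and let $m_{out}=-\ln 2/\ln(1-p)$ be the median number of trials for the attacker to successfully impersonate a user. Then $$m_{out}=\Omega\left(2^{n(1-h(\varepsilon/n))-\log_2(N)-\log_2\left(1+6\frac{N-1}{2^{n+1}}\right)}\right)$$ and $$m_{out}=O\left(2^{n(1-h(\varepsilon/n))+\frac{1}{2}\log_2\left(\varepsilon\left(1-\frac{\varepsilon}{n}\right)\right)-\log_2 N-\log_2\left(1+\frac{N-1}{2^{n+1}}\right)}\right).$$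
   Context: Templates are binary vectors in $\mathbb{Z}_2^n$ compared with the Hamming distance $d_{\mathcal H}$; a guess $t$ is accepted against enrolled template $v$ if $d_{\mathcal H}(t,v)\le\varepsilon$. The attacker draws independent uniformly random templates until one is accepted against some enrolled template. $|B_\varepsilon|=\sum_{k=0}^{\varepsilon}\binom{n}{k}$ is the size of a Hamming ball of radius $\varepsilon$, $V_\varepsilon=|B_\varepsilon|/2^n$, and $h(x)=-x\log_2x-(1-x)\log_2(1-x)$ is the binary entropy function. *)

(* Defs.v *)
From Stdlib Require Import Reals.
Open Scope R_scope.

Definition log2 (x : R) : R := ln x / ln 2.

(* binary entropy h(x) = -x log2 x - (1-x) log2 (1-x)
   (Stdlib's ln is 0 on nonpositive arguments, so 0*log2 0 = 0 as usual) *)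
Definition h (x : R) : R := - x * log2 x - (1 - x) * log2 (1 - x).

(* |B_eps| = sum_{k=0}^{eps} C(n,k)  (sum_f_R0 f m = f 0 + ... + f m) *)
Definition ball_size (n eps : nat) : R := sum_f_R0 (fun k => C n k) eps.

Definition Veps (n eps : nat) : R := ball_size n eps / 2 ^ n.

Fixpoint prodR (f : nat -> R) (N : nat) : R :=
  match N with
  | O => 1
  | S k => prodR f k * f k
  end.

Definition p_succ (n N eps : nat) : R :=
  1 - prodR (fun l => 1 - 2 ^ n / (2 ^ n - INR l) * Veps n eps) N.

Definition m_out (n N eps : nat) : R := - ln 2 / ln (1 - p_succ n N eps).

(* Main.v *)
Require Import Defs.
From Stdlib Require Import Reals Lra Lia Psatz.
From Coquelicot Require Import Coquelicot.
Open Scope R_scope.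
Lemma F1 x : 0 <= x -> 2*x/(2+x) <= ln (1+x).
Proof.
intros Hx. destruct (Req_dec x 0) as [->|Hx0].
{ replace (1+0) with 1 by ring. rewrite ln_1. lra. }
destruct (MVT_cor2 (fun t => ln (1+t) - 2*t/(2+t)) (fun t => 1/(1+t) - 4/(2+t)^2) 0 x) as [c [Hc1 Hc2]]; [lra| |].
{ intros c Hc. apply is_derive_Reals. auto_derive. lra. field. lra. }
assert (Hd : 1/(1+c) - 4/(2+c)^2 = c^2/((1+c)*(2+c)^2)) by (field; lra).
rewrite Hd in Hc1.
assert (0 <= c^2/((1+c)*(2+c)^2) * (x-0)).
{ apply Rmult_le_pos; [|lra]. apply Rdiv_le_0_compat. nra. apply Rmult_lt_0_compat; nra. }
replace (1+0) with 1 in Hc1 by ring. rewrite ln_1 in Hc1. lra.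
Qed.
Lemma F2 x : 0 <= x -> ln (1+x) <= x - x^2/2 + x^3/3.
Proof.
intros Hx. destruct (Req_dec x 0) as [->|Hx0].
{ replace (1+0) with 1 by ring. rewrite ln_1. lra. }
destruct (MVT_cor2 (fun t => t - t^2/2 + t^3/3 - ln (1+t)) (fun t => 1 - t + t^2 - 1/(1+t)) 0 x) as [c [Hc1 Hc2]]; [lra| |].
{ intros c Hc. apply is_derive_Reals. auto_derive. lra. field. lra. }
assert (Hd : 1 - c + c^2 - 1/(1+c) = c^3/(1+c)) by (field; lra).
rewrite Hd in Hc1.
assert (0 <= c^3/(1+c) * (x-0)).
{ apply Rmult_le_pos; [|lra]. apply Rdiv_le_0_compat. apply pow_le; lra. lra. }
replace (1+0) with 1 in Hc1 by ring. rewrite ln_1 in Hc1. lra.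
Qed.

Definition lg (m : nat) : R := ln (INR (Factorial.fact m)) + INR m - (INR m + /2) * ln (INR m).

Lemma lg_step m : (1 <= m)%nat ->
  lg (S m) = lg m + 1 - (INR m + /2) * ln (1 + / INR m).
Proof.
intros Hm. assert (Hm' : 1 <= INR m) by (apply (le_INR 1); lia).
unfold lg. rewrite fact_simpl, mult_INR, S_INR.
rewrite ln_mult; [| lra | apply INR_fact_lt_0].
replace (1 + / INR m) with ((INR m + 1) / INR m) by (field; lra).
rewrite ln_div by lra. ring.
Qed.

Lemma step_lo m : 1 <= m -> 1 <= (m + /2) * ln (1 + / m).
Proof.
intros Hm. assert (H := F1 (/ m)).
assert (0 < / m) by (apply Rinv_0_lt_compat; lra).
assert (E : (m + /2) * (2 * / m / (2 + / m)) = 1). { field. split; lra. }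
assert (0 <= m + /2) by lra.
specialize (H ltac:(lra)). rewrite <- E at 1. apply Rmult_le_compat_l; lra.
Qed.

Lemma step_hi m : 1 <= m -> (m + /2) * ln (1 + / m) - 1 <= /(2*m) - /(2*(m+1)).
Proof.
intros Hm. set (x := / m).
assert (Hx : 0 < x) by (apply Rinv_0_lt_compat; lra).
assert (Hx1 : x <= 1) by (unfold x; rewrite <- Rinv_1; apply Rinv_le_contravar; lra).
assert (H := F2 x ltac:(lra)).
assert (0 <= m + /2) by lra.
apply Rle_trans with ((m + /2) * (x - x^2/2 + x^3/3) - 1).
{ apply Rplus_le_compat_r. apply Rmult_le_compat_l; lra. }
assert (Em : m = / x) by (unfold x; field; lra).
rewrite Em.
replace ((/ x + / 2) * (x - x ^ 2 / 2 + x ^ 3 / 3) - 1) with (x^2/12 + x^3/6) by (field; lra).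
replace (/ (2 * / x) - / (2 * (/ x + 1))) with (x^2/(2*(1+x))) by (field; lra).
apply Rmult_le_reg_r with (12 * (1+x)). lra.
replace (x ^ 2 / (2 * (1 + x)) * (12 * (1 + x))) with (x^2 * 6) by (field; lra).
replace ((x ^ 2 / 12 + x ^ 3 / 6) * (12 * (1 + x))) with (x^2 * (1 + 3*x + 2*x^2)) by (field; lra).
apply Rmult_le_compat_l. apply pow_le; lra. nra.
Qed.

Lemma lg_bounds m : (1 <= m)%nat -> /2 + /(2 * INR m) <= lg m <= 1.
Proof.
induction m as [|m IH]; intros Hm; [lia|].
destruct (Nat.eq_dec m 0) as [->|Hm0].
{ unfold lg. simpl. rewrite ln_1. lra. }
assert (Hm1 : (1 <= m)%nat) by lia.
specialize (IH Hm1).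
assert (HR : 1 <= INR m) by (apply (le_INR 1); lia).
rewrite lg_step by lia. rewrite S_INR.
assert (A := step_lo (INR m) HR). assert (B := step_hi (INR m) HR).
split; lra.
Qed.

Lemma binom_lower k j : (1 <= k)%nat -> (1 <= j)%nat ->
  -(3/2) + (INR (k+j) + /2) * ln (INR (k+j)) - (INR k + /2) * ln (INR k)
   - (INR j + /2) * ln (INR j) <= ln (Binomial.C (k+j) k).
Proof.
intros Hk Hj. unfold Binomial.C. replace (k + j - k)%nat with j by lia.
assert (Ak := lg_bounds k Hk). assert (Aj := lg_bounds j Hj).
assert (An := lg_bounds (k+j) ltac:(lia)).
assert (0 < / (2 * INR k)) by (apply Rinv_0_lt_compat; apply Rmult_lt_0_compat; [lra| apply lt_0_INR; lia]).
assert (0 < / (2 * INR j)) by (apply Rinv_0_lt_compat; apply Rmult_lt_0_compat; [lra| apply lt_0_INR; lia]).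
assert (0 < / (2 * INR (k+j))) by (apply Rinv_0_lt_compat; apply Rmult_lt_0_compat; [lra| apply lt_0_INR; lia]).
unfold lg in *.
rewrite ln_div; [| apply INR_fact_lt_0 | apply Rmult_lt_0_compat; apply INR_fact_lt_0].
rewrite ln_mult by apply INR_fact_lt_0.
rewrite plus_INR in *. lra.
Qed.

Lemma C_pos n k : 0 < Binomial.C n k.
Proof. unfold Binomial.C. apply Rdiv_lt_0_compat. apply INR_fact_lt_0. apply Rmult_lt_0_compat; apply INR_fact_lt_0. Qed.

Lemma sum_nonneg f n : (forall i, 0 <= f i) -> 0 <= sum_f_R0 f n.
Proof. intros H; induction n; simpl; [apply H|]. specialize (H (S n)); lra. Qed.

Lemma sum_mono f m n : (m <= n)%nat -> (forall i, 0 <= f i) -> sum_f_R0 f m <= sum_f_R0 f n.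
Proof.
intros Hmn H. induction Hmn; [lra|]. simpl. specialize (H (S m0)). lra.
Qed.

Lemma ball_ge_C n eps : Binomial.C n eps <= ball_size n eps.
Proof.
unfold ball_size. destruct eps; simpl; [lra|].
assert (0 <= sum_f_R0 (fun k => Binomial.C n k) eps) by (apply sum_nonneg; intros; left; apply C_pos). lra.
Qed.

Lemma ball_ge_1 n eps : 1 <= ball_size n eps.
Proof.
unfold ball_size. replace 1 with (sum_f_R0 (fun k => Binomial.C n k) 0).
apply sum_mono; [lia| intros; left; apply C_pos].
simpl. unfold Binomial.C. rewrite Nat.sub_0_r. simpl. field. apply INR_fact_neq_0.
Qed.

Lemma term_mono p n i e : 0 <= p -> p <= 1 - p -> (i <= e)%nat -> (e <= n)%nat ->
  p ^ e * (1-p) ^ (n - e) <= p ^ i * (1-p) ^ (n - i).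
Proof.
intros H0 H1 Hie Hen.
replace e with (i + (e - i))%nat at 1 by lia.
replace (n - i)%nat with ((n - e) + (e - i))%nat by lia.
rewrite !pow_add.
assert (p ^ (e - i) <= (1-p) ^ (e - i)) by (apply pow_incr; lra).
assert (0 <= p ^ i) by (apply pow_le; lra).
assert (0 <= (1-p) ^ (n-e)) by (apply pow_le; lra).
assert (0 <= p ^ (e-i)) by (apply pow_le; lra).
replace (p ^ i * p ^ (e - i) * (1 - p) ^ (n - e)) with ((p ^ i * (1 - p) ^ (n - e)) * p ^ (e - i)) by ring.
replace (p ^ i * ((1 - p) ^ (n - e) * (1 - p) ^ (e - i))) with ((p ^ i * (1 - p) ^ (n - e)) * (1-p) ^ (e - i)) by ring.
apply Rmult_le_compat_l; [apply Rmult_le_pos|]; lra.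
Qed.

Lemma ball_entropy n e p : (e <= n)%nat -> 0 <= p -> p <= 1 - p ->
  ball_size n e * (p ^ e * (1-p) ^ (n - e)) <= 1.
Proof.
intros Hen H0 H1.
assert (Hb := binomial p (1-p) n).
replace (p + (1-p)) with 1 in Hb by ring. rewrite pow1 in Hb.
apply Rle_trans with (sum_f_R0 (fun i => Binomial.C n i * p ^ i * (1 - p) ^ (n - i)) n); [|lra].
unfold ball_size. rewrite Rmult_comm, scal_sum.
apply Rle_trans with (sum_f_R0 (fun i => Binomial.C n i * p ^ i * (1 - p) ^ (n - i)) e).
- apply sum_Rle. intros i Hi. rewrite Rmult_assoc. apply Rmult_le_compat_l; [left; apply C_pos|].
  apply term_mono; lia || lra.
- apply sum_mono; [lia|]. intros i. apply Rmult_le_pos; [apply Rmult_le_pos; [left; apply C_pos| apply pow_le; lra]|apply pow_le; lra].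
Qed.

Lemma prod_bounds (f : nat -> R) N a b : (forall l, (l < N)%nat -> exp (-b) <= f l <= exp (-a)) ->
  exp (-b) ^ N <= prodR f N <= exp (-a) ^ N.
Proof.
induction N; intros H; simpl; [lra|].
destruct IHN as [I1 I2]. { intros l Hl; apply H; lia. }
destruct (H N ltac:(lia)) as [J1 J2].
assert (0 < exp (-b)) by apply exp_pos. assert (0 < exp (-b) ^ N) by (apply pow_lt; lra).
split; rewrite Rmult_comm; apply Rmult_le_compat; lra.
Qed.

Lemma ln_le_inv' a b : 0 < a -> 0 < b -> ln a <= ln b -> a <= b.
Proof.
intros Ha Hb H. destruct (Rle_lt_dec a b) as [|Hl]; [assumption|].
assert (ln b < ln a) by (apply ln_increasing; lra). lra.
Qed.

Lemma exp_pow_ln a N : ln (exp a ^ N) = INR N * a.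
Proof. rewrite ln_pow by apply exp_pos. rewrite ln_exp. ring. Qed.

Lemma exp_ln_pow x k : 0 < x -> exp (INR k * ln x) = x ^ k.
Proof. intros Hx. rewrite <- Rpower_pow by exact Hx. reflexivity. Qed.

Lemma ln2_pos : 0 < ln 2.
Proof. rewrite <- ln_1. apply ln_increasing; lra. Qed.

Lemma h0 : h 0 = 0.
Proof. unfold h, log2. replace (1 - 0) with 1 by ring. rewrite ln_1. field. apply Rgt_not_eq, ln2_pos. Qed.

Lemma X_eq n eps : (1 <= eps)%nat -> (eps < n)%nat ->
  INR n * (1 - h (INR eps / INR n)) * ln 2 =
  INR n * ln 2 + INR eps * ln (INR eps / INR n) + INR (n - eps) * ln (1 - INR eps / INR n).
Proof.
intros H1 H2. assert (0 < INR n) by (apply lt_0_INR; lia).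
assert (0 < ln 2) by apply ln2_pos.
unfold h, log2. rewrite minus_INR by lia.
set (a := ln (INR eps / INR n)). set (b := ln (1 - INR eps / INR n)).
field. lra.
Qed.

Lemma VT n eps : (1 <= n)%nat -> INR eps / INR n <= 1/2 ->
  Veps n eps * Rpower 2 (INR n * (1 - h (INR eps / INR n))) <= 1.
Proof.
intros Hn Hp. assert (Hn' : 0 < INR n) by (apply lt_0_INR; lia).
assert (Hen : (eps <= n)%nat).
{ apply INR_le. apply Rmult_le_compat_r with (r := INR n) in Hp; [|lra].
  unfold Rdiv in Hp. rewrite Rmult_assoc, Rinv_l in Hp by lra. 
  assert (0 <= INR eps) by apply pos_INR. lra. }
assert (H2n : 0 < 2 ^ n) by (apply pow_lt; lra).
destruct eps as [|e].
- replace (INR 0 / INR n) with 0 by (simpl; field; lra). rewrite h0.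
  replace (INR n * (1 - 0)) with (INR n) by ring. rewrite Rpower_pow by lra.
  unfold Veps. replace (ball_size n 0) with 1.
  right; field; lra.
  unfold ball_size. simpl. unfold Binomial.C. rewrite Nat.sub_0_r. simpl. field. apply INR_fact_neq_0.
- set (eps := S e) in *. set (p := INR eps / INR n).
  assert (Hp0 : 0 < p) by (apply Rdiv_lt_0_compat; [apply lt_0_INR; unfold eps; lia|lra]).
  assert (Hlt : (eps < n)%nat).
  { apply INR_lt. unfold p in Hp0, Hp. apply Rmult_le_compat_r with (r := INR n) in Hp; [|lra].
    unfold Rdiv in Hp. rewrite Rmult_assoc, Rinv_l in Hp by lra.
    assert (0 < INR eps) by (apply lt_0_INR; unfold eps; lia). lra. }
  unfold Rpower. unfold p. rewrite X_eq by (unfold eps; lia). fold p.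
  assert (Hp' : p <= 1/2) by (unfold p; lra).
  rewrite !exp_plus. rewrite !exp_ln_pow by lra. unfold Veps.
  assert (Hb := ball_entropy n eps p ltac:(lia) ltac:(lra) ltac:(lra)).
  replace (ball_size n eps / 2 ^ n * (2 ^ n * p ^ eps * (1 - p) ^ (n - eps))) with (ball_size n eps * (p ^ eps * (1 - p) ^ (n - eps))) by (field; lra).
  exact Hb.
Qed.

Lemma exp_mono x y : x <= y -> exp x <= exp y.
Proof. intros [H|H]; [left; apply exp_increasing; exact H| subst; lra]. Qed.

Lemma exp_m2q q : 0 <= q -> q <= 1/2 -> exp (-(2*q)) <= 1 - q.
Proof.
intros H0 H1. rewrite exp_Ropp. assert (H := exp_ineq1_le (2*q)).
apply Rle_trans with (/ (1 + 2*q)). apply Rinv_le_contravar; lra.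
apply Rmult_le_reg_r with (1 + 2*q); [lra|]. rewrite Rinv_l by lra. nra.
Qed.

Lemma core n N eps : (1<=n)%nat -> (1<=N)%nat -> INR eps / INR n <= 1/2 ->
  INR N < Rpower 2 (INR n * (1 - h (INR eps / INR n)) - 1) ->
  exists L, 0 < L /\ m_out n N eps = ln 2 / L /\ INR N * Veps n eps <= L /\
    L <= 4 * INR N * Veps n eps /\ 2 * INR N < 2 ^ n.
Proof.
intros Hn HN Hp HNT.
set (X := INR n * (1 - h (INR eps / INR n))) in *.
set (T := Rpower 2 X).
assert (HT : Rpower 2 (X - 1) = T / 2).
{ unfold T, Rpower. replace ((X - 1) * ln 2) with (X * ln 2 + - ln 2) by ring.
  rewrite exp_plus, exp_Ropp, exp_ln by lra. field. }
rewrite HT in HNT.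
assert (HVT := VT n eps Hn Hp). fold X T in HVT.
set (V := Veps n eps) in *.
assert (H2n : 0 < 2 ^ n) by (apply pow_lt; lra).
assert (HV1 : / 2 ^ n <= V).
{ unfold V, Veps. unfold Rdiv. rewrite Rmult_comm. rewrite <- (Rmult_1_r (/ 2 ^ n)) at 1.
  apply Rmult_le_compat_l. left; apply Rinv_0_lt_compat; lra. apply ball_ge_1. }
assert (HV0 : 0 < V) by (apply Rlt_le_trans with (/ 2 ^ n); [apply Rinv_0_lt_compat|]; lra).
assert (HN1 : 1 <= INR N) by (apply (le_INR 1); lia).
assert (HNV : 2 * INR N * V < 1) by nra.
assert (HN2n : 2 * INR N < 2 ^ n).
{ assert (2 * INR N * / 2 ^ n < 1) by nra.
  apply Rmult_lt_compat_r with (r := 2 ^ n) in H; [|lra].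
  rewrite Rmult_assoc, Rinv_l, Rmult_1_r, Rmult_1_l in H by lra. exact H. }
set (f := fun l : nat => 1 - 2 ^ n / (2 ^ n - INR l) * V).
assert (Hf : forall l, (l < N)%nat -> exp (- (4 * V)) <= f l <= exp (- V)).
{ intros l Hl. unfold f.
  assert (Hl1 : INR l + 1 <= INR N) by (rewrite <- S_INR; apply le_INR; lia).
  assert (Hl0 : 0 <= INR l) by apply pos_INR.
  set (r := 2 ^ n / (2 ^ n - INR l)).
  assert (Hr1 : 1 <= r).
  { unfold r. apply Rmult_le_reg_r with (2 ^ n - INR l); [lra|].
    unfold Rdiv. rewrite Rmult_assoc, Rinv_l by lra. lra. }
  assert (Hr2 : r <= 2).
  { unfold r. apply Rmult_le_reg_r with (2 ^ n - INR l); [lra|].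
    unfold Rdiv. rewrite Rmult_assoc, Rinv_l by lra. lra. }
  assert (Hq : r * V <= 1/2).
  { destruct l as [|l'].
    - unfold r. simpl INR. replace (2 ^ n / (2 ^ n - 0)) with 1 by (field; lra). nra.
    - assert (1 <= INR (S l')) by (apply (le_INR 1); lia). nra. }
  split.
  - apply Rle_trans with (exp (-(2 * (r * V)))). apply exp_mono. nra.
    apply exp_m2q; nra.
  - apply Rle_trans with (1 - V). nra. assert (H := exp_ineq1_le (- V)). lra. }
destruct (prod_bounds f N V (4 * V) Hf) as [Q1 Q2].
set (Q := prodR f N) in *.
assert (HQ0 : 0 < Q) by (apply Rlt_le_trans with (exp (- (4 * V)) ^ N); [apply pow_lt, exp_pos|exact Q1]).
assert (L1 : ln Q <= INR N * (- V)).
{ rewrite <- exp_pow_ln. apply ln_le; assumption. }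
assert (L2 : INR N * (- (4 * V)) <= ln Q).
{ rewrite <- exp_pow_ln. apply ln_le; [apply pow_lt, exp_pos|assumption]. }
exists (- ln Q). repeat split; try nra.
unfold m_out, p_succ. fold V. fold f. fold Q.
replace (1 - (1 - Q)) with Q by ring. field. nra.
Qed.

Lemma ln_div_pos_le a b : 0 < a -> 0 < b -> ln a <= ln b -> a <= b.
Proof.
intros Ha Hb H. destruct (Rle_lt_dec a b) as [|Hl]; [assumption|].
assert (ln b < ln a) by (apply ln_increasing; lra). lra.
Qed.

Theorem corollary4p2 :
  (exists c : R, 0 < c /\
     forall n N eps : nat,
       (1 <= n)%nat -> (1 <= N)%nat ->
       INR eps / INR n <= 1 / 2 ->
       INR N < Rpower 2 (INR n * (1 - h (INR eps / INR n)) - 1) ->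
       c * Rpower 2 (INR n * (1 - h (INR eps / INR n)) - log2 (INR N)
                     - log2 (1 + 6 * ((INR N - 1) / 2 ^ (n + 1))))
         <= m_out n N eps)
  /\
  (exists C : R, 0 < C /\
     forall n N eps : nat,
       (1 <= n)%nat -> (1 <= N)%nat -> (1 <= eps)%nat ->
       INR eps / INR n <= 1 / 2 ->
       INR N < Rpower 2 (INR n * (1 - h (INR eps / INR n)) - 1) ->
       m_out n N eps
         <= C * Rpower 2 (INR n * (1 - h (INR eps / INR n))
                          + / 2 * log2 (INR eps * (1 - INR eps / INR n))
                          - log2 (INR N)
                          - log2 (1 + (INR N - 1) / 2 ^ (n + 1)))).
Proof.
assert (Hl2 := ln2_pos).
split.
- exists (ln 2 / 4). split; [lra|].
  intros n N eps Hn HN Hp HNT.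
  destruct (core n N eps Hn HN Hp HNT) as [L [HL0 [Hm [HL1 [HL2 H2n]]]]].
  assert (HVT := VT n eps Hn Hp).
  set (X := INR n * (1 - h (INR eps / INR n))) in *.
  set (V := Veps n eps) in *.
  assert (HN1 : 1 <= INR N) by (apply (le_INR 1); lia).
  assert (H2n1 : 0 < 2 ^ (n+1)) by (apply pow_lt; lra).
  set (D := 1 + 6 * ((INR N - 1) / 2 ^ (n + 1))).
  assert (HD : 1 <= D).
  { unfold D. assert (0 <= (INR N - 1) / 2 ^ (n + 1)) by (apply Rdiv_le_0_compat; lra). lra. }
  assert (HV0 : 0 < V) by nra.
  rewrite Hm. unfold Rpower.
  replace ((X - log2 (INR N) - log2 D) * ln 2) with (X * ln 2 - ln (INR N) - ln D)
    by (unfold log2; field; lra).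
  apply ln_div_pos_le.
  + apply Rmult_lt_0_compat; [lra| apply exp_pos].
  + apply Rdiv_lt_0_compat; lra.
  + rewrite ln_mult, ln_exp, ln_div, ln_div by (lra || apply exp_pos).
    assert (A1 : ln L <= ln (4 * INR N * V)) by (apply ln_le; lra).
    rewrite !ln_mult in A1 by lra.
    assert (A2 : ln (V * exp (X * ln 2)) <= ln 1) by (apply ln_le; [apply Rmult_lt_0_compat; [lra|apply exp_pos]| exact HVT]).
    rewrite ln_mult, ln_exp, ln_1 in A2 by (lra || apply exp_pos).
    assert (A3 : ln 1 <= ln D) by (apply ln_le; lra). rewrite ln_1 in A3.
    replace (ln 4) with (ln (2 * 2)) in * by (f_equal; ring).
    rewrite ln_mult in * by lra. lra.
- exists (2 * ln 2 * exp (3/2)). split; [assert (0 < exp (3/2)) by apply exp_pos; nra|].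
  intros n N eps Hn HN He Hp HNT.
  destruct (core n N eps Hn HN Hp HNT) as [L [HL0 [Hm [HL1 [HL2 H2n]]]]].
  assert (Hn' : 0 < INR n) by (apply lt_0_INR; lia).
  assert (Hlt : (eps < n)%nat).
  { apply INR_lt. apply Rmult_le_compat_r with (r := INR n) in Hp; [|lra].
    unfold Rdiv in Hp. rewrite Rmult_assoc, Rinv_l in Hp by lra.
    assert (0 < INR eps) by (apply lt_0_INR; lia). lra. }
  assert (HX := X_eq n eps He Hlt).
  set (X := INR n * (1 - h (INR eps / INR n))) in *.
  set (V := Veps n eps) in *.
  assert (HN1 : 1 <= INR N) by (apply (le_INR 1); lia).
  assert (H2n1 : 2 ^ (n+1) = 2 * 2 ^ n) by (rewrite pow_add; simpl; ring).
  assert (H2n0 : 0 < 2 ^ n) by (apply pow_lt; lra).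
  set (D := 1 + (INR N - 1) / 2 ^ (n + 1)).
  assert (HD : 1 <= D <= 2).
  { unfold D. rewrite H2n1. split.
    - assert (0 <= (INR N - 1) / (2 * 2 ^ n)) by (apply Rdiv_le_0_compat; lra). lra.
    - assert ((INR N - 1) / (2 * 2 ^ n) <= 1); [|lra].
      apply Rmult_le_reg_r with (2 * 2 ^ n); [lra|]. unfold Rdiv. rewrite Rmult_assoc, Rinv_l by lra. lra. }
  assert (HV0 : 0 < V).
  { unfold V, Veps. apply Rdiv_lt_0_compat; [|lra]. assert (H := ball_ge_1 n eps). lra. }
  destruct (Nat.le_exists_sub eps n ltac:(lia)) as [j [Hj _]].
  assert (Hj1 : (1 <= j)%nat) by lia.
  replace (n - eps)%nat with j in HX by lia.
  assert (Hjn : INR n = INR eps + INR j) by (rewrite Hj, plus_INR; ring).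
  assert (He0 : 0 < INR eps) by (apply lt_0_INR; lia).
  assert (Hj0 : 0 < INR j) by (apply lt_0_INR; lia).
  assert (E1 : 1 - INR eps / INR n = INR j / INR n). { unfold Rdiv. rewrite Hjn. field. lra. }
  rewrite E1 in HX |- *.
  rewrite Hm. unfold Rpower.
  replace ((X + / 2 * log2 (INR eps * (INR j / INR n)) - log2 (INR N) - log2 D) * ln 2)
     with (X * ln 2 + / 2 * ln (INR eps * (INR j / INR n)) - ln (INR N) - ln D)
    by (unfold log2; field; lra).
  apply Rle_trans with (ln 2 / (INR N * V)).
  { unfold Rdiv. apply Rmult_le_compat_l; [lra|]. apply Rinv_le_contravar; nra. }
  apply ln_div_pos_le.
  + apply Rdiv_lt_0_compat; nra.
  + apply Rmult_lt_0_compat; [assert (0 < exp (3/2)) by apply exp_pos; nra| apply exp_pos].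
  + assert (B1 : ln (ln 2 / (INR N * V)) = ln (ln 2) - (ln (INR N) + ln V)).
    { rewrite ln_div, ln_mult by nra. ring. }
    assert (B2 : forall Y, ln (2 * ln 2 * exp (3/2) * exp Y) = ln 2 + ln (ln 2) + 3/2 + Y).
    { intros Y. assert (0 < exp (3/2)) by apply exp_pos.
      rewrite ln_mult; [| nra | apply exp_pos].
      rewrite ln_mult; [| nra | apply exp_pos].
      rewrite ln_mult; [| lra | lra].
      rewrite !ln_exp; ring. }
    assert (B3 : ln (INR eps * (INR j / INR n)) = ln (INR eps) + ln (INR j) - ln (INR n)).
    { rewrite ln_mult, ln_div by (lra || apply Rdiv_lt_0_compat; lra). ring. }
    rewrite B1, B2, B3.
    rewrite HX. rewrite !ln_div by lra.
    assert (A1 : ln D <= ln 2) by (apply ln_le; lra).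
    assert (A2 : ln (Binomial.C n eps) <= ln (ball_size n eps)) by (apply ln_le; [apply C_pos| apply ball_ge_C]).
    assert (A3 : ln V = ln (ball_size n eps) - INR n * ln 2).
    { unfold V, Veps. rewrite ln_div, ln_pow by (lra || (assert (H := ball_ge_1 n eps); lra)). ring. }
    assert (A4 := binom_lower eps j He Hj1). replace (eps + j)%nat with n in A4 by lia.
    rewrite A3. rewrite Hjn in *. lra.
Qed.
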